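(* Let $\mathcal{X}=\mathcal{X}^{(1)}\times\cdots\times\mathcal{X}^{(d)}$ with each $\mathcal{X}^{(i)}$ finite, $P\in\mathcal{L}(\mathcal{X})$, and $L_i\in\mathcal{L}(\mathcal{X}^{(i)})$ for $i=1,\dots,d$. 1. (Pythagorean identity) If $\pi\in\mathcal{P}(\mathcal{X})$ is positive, then $D^\pi_{KL}(P\|\otimes_{i=1}^dL_i)=D^\pi_{KL}(P\|\otimes_{i=1}^dP^{(i)}_\pi)+D^\pi_{KL}(\otimes_{i=1}^dP^{(i)}_\pi\|\otimes_{i=1}^dL_i)=D^\pi_{KL}(P\|\otimes_{i=1}^dP^{(i)}_\pi)+\sum_{i=1}^dD^{\pi^{(i)}}_{KL}(P^{(i)}_\pi\|L_i)$, where $\pi^{(i)}$ is the $i$th marginal of $\pi$. In particular $\otimes_{i=1}^dP^{(i)}_\pi$ is the unique minimizer of $(L_1,\dots,L_d)\mapsto D^\pi_{KL}(P\|\otimes_iL_i)$, and $\mathbb{I}^\pi(P)=D^\pi_{KL}(P\|\otimes_{i=1}^dP^{(i)}_\pi)$. 2. (Bisection) If $\pi=\otimes_{i=1}^d\pi^{(i)}$ is a positive product distribution and $P$ is $\pi$-stationary, then $\mathbb{I}^\pi(P)=\mathbb{I}^\pi(P^* )$.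
   Context: $\mathcal{P}(\Omega),\mathcal{L}(\Omega)$: probability masses and transition matrices on finite $\Omega$. $D_{KL}^{\pi}(M\|L):=\sum_{x,y}\pi(x)M(x,y)\ln\frac{M(x,y)}{L(x,y)}$ (value $+\infty$ if $M(x,y)>0=L(x,y)$ for some $x$ with $\pi(x)>0$; $0\ln(0/0)=0$). $(\otimes_iL_i)(x,y)=\prod_iL_i(x^i,y^i)$. $\mathbb{I}^\pi(P):=\min_{L_i\in\mathcal{L}(\mathcal{X}^{(i)})}D^\pi_{KL}(P\|\otimes_{i=1}^dL_i)$. For positive $\pi$, the $i$th marginal transition matrix is $P^{(i)}_\pi(x^i,y^i):=\frac{\sum_{x^j,y^j,\,j\ne i}\pi(x)P(x,y)}{\pi^{(i)}(x^i)}$ where the sum is over all coordinates $j\neq i$ of $x=(x^1,\dots,x^d)$ and $y=(y^1,\dots,y^d)$. For $\pi$-stationary $P$, $P^*(x,y)=\frac{\pi(y)}{\pi(x)}P(y,x)$. *)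

(* Defs.v *)
From HB Require Import structures.
From mathcomp Require Import all_boot all_order all_algebra.
From mathcomp Require Import all_classical all_reals all_analysis.
Set Implicit Arguments. Unset Strict Implicit. Unset Printing Implicit Defensive.
Import Order.TTheory GRing.Theory Num.Theory.
Local Open Scope ring_scope.

Notation prodspace X := {dffun forall i, X i}.

Section Defs.
Variable R : realType.

Definition prob_mass (T : finType) (p : T -> R) : Prop :=
  (forall x, 0 <= p x) /\ \sum_x p x = 1.

Definition positive (T : finType) (p : T -> R) : Prop := forall x, 0 < p x.

Definition transition (T : finType) (M : T -> T -> R) : Prop :=
  (forall x y, 0 <= M x y) /\ (forall x, \sum_y M x y = 1).

(* D^pi_KL(M || L), with value +oo if M(x,y) > 0 = L(x,y) for some x with
   pi(x) > 0, and the convention 0 ln (0/0) = 0 (terms with M(x,y)=0 vanish). *)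
Definition KL (T : finType) (pi : T -> R) (M L : T -> T -> R) : \bar R :=
  if [exists x, [exists y, [&& 0 < pi x, 0 < M x y & L x y == 0]]]
  then +oo%E
  else (\sum_x \sum_y (if M x y == 0 then 0
                        else pi x * M x y * ln (M x y / L x y)))%:E.


Definition tensor (d : nat) (X : 'I_d -> finType)
    (L : forall i, X i -> X i -> R) : prodspace X -> prodspace X -> R :=
  fun x y => \prod_(i < d) L i (x i) (y i).

Definition marginal (d : nat) (X : 'I_d -> finType) (pi : prodspace X -> R)
    (i : 'I_d) : X i -> R :=
  fun a => \sum_(x : prodspace X | x i == a) pi x.

Arguments marginal {d X} pi i.

Definition marginal_transition (d : nat) (X : 'I_d -> finType)
    (pi : prodspace X -> R) (P : prodspace X -> prodspace X -> R)
    (i : 'I_d) : X i -> X i -> R :=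
  fun a b => (\sum_(x : prodspace X | x i == a) \sum_(y : prodspace X | y i == b)
                 pi x * P x y) / marginal pi i a.

Arguments marginal_transition {d X} pi P i.

(* I^pi(P) := min over L_i in L(X^(i)) of D^pi_KL(P || tensor L)
   (rendered as the infimum; part 1 shows it is attained). *)
Definition Ipi (d : nat) (X : 'I_d -> finType) (pi : prodspace X -> R)
    (P : prodspace X -> prodspace X -> R) : \bar R :=
  ereal_inf [set KL pi P (tensor L) | L in
     [set L : forall i, X i -> X i -> R | forall i, transition (L i)]].

Definition stationary (T : finType) (pi : T -> R) (P : T -> T -> R) : Prop :=
  forall y, \sum_x pi x * P x y = pi y.

Definition reversal (T : finType) (pi : T -> R) (P : T -> T -> R) : T -> T -> R :=
  fun x y => pi y / pi x * P y x.

End Defs.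

Arguments marginal {R d X} pi i.
Arguments marginal_transition {R d X} pi P i.

(* Main.v *)
Require Import Defs.
From HB Require Import structures.
From mathcomp Require Import all_boot all_order all_algebra.
From mathcomp Require Import all_classical all_reals all_analysis.
From mathcomp Require Import ring lra.
Import Order.TTheory GRing.Theory Num.Theory.
Local Open Scope ring_scope.

Section Gen.
Variable R : realType.

Lemma ln_le_sub1 (y : R) : 0 < y -> ln y <= y - 1.
Proof.
move=> y0; have := @le_ln1Dx R (y - 1); rewrite addrCA subrr addr0; apply.
lra.
Qed.

Lemma ln_lt_sub1 (y : R) : 0 < y -> y != 1 -> ln y < y - 1.
Proof.
move=> y0 y1; set s := Num.sqrt y.
have s0 : 0 < s by rewrite sqrtr_gt0.
have ss : s * s = y by rewrite -expr2 sqr_sqrtr // ltW.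
have s1 : s != 1 by apply: contraNneq y1 => e; rewrite -ss e mulr1.
have := @ln_le_sub1 s s0.
rewrite -ss lnM ?posrE // => h.
have : 0 < (s - 1) ^+ 2 by rewrite lt_neqAle sqr_ge0 andbT eq_sym sqrf_eq0 subr_eq0.
nra.
Qed.


Lemma term_eq (p M Lv : R) : 0 <= M -> (0 < M -> 0 < Lv) ->
  (if M == 0 then 0 else p * M * ln (M / Lv)) = p * M * (ln M - ln Lv).
Proof.
move=> M0 hL; have [->|Mn0] := eqVneq M 0; first by rewrite mulr0 mul0r.
have Mp : 0 < M by rewrite lt_neqAle eq_sym Mn0.
by rewrite ln_div // posrE; apply: hL.
Qed.

Lemma gibbs_term (p q : R) : 0 <= p -> 0 <= q -> (0 < p -> 0 < q) ->
  p - q <= p * (ln p - ln q) ?= iff (p == q).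
Proof.
move=> p0 q0 hq; apply/leifP.
have [->|pq] := eqVneq p q; first by rewrite !subrr mulr0.
have [p00|pn0] := eqVneq p 0.
  rewrite p00 mul0r sub0r oppr_lt0 lt_neqAle q0 andbT.
  by move: pq; rewrite p00 eq_sym.
have pp : 0 < p by rewrite lt_neqAle eq_sym pn0.
have qp := hq pp.
have h := @ln_lt_sub1 (q / p) (divr_gt0 qp pp).
rewrite ln_div ?posrE // in h.
have : q / p != 1.
  apply: contra_neq pq => e; 
  by rewrite -[q](divfK pn0) e mul1r.
move=> /h {}h.
rewrite -(ltr_pM2l pp) in h.
rewrite (_ : p * (q / p - 1) = q - p) in h; last first.
  by rewrite mulrBr mulr1 mulrCA divff // mulr1.
have -> : p * (ln p - ln q) = - (p * (ln q - ln p)) by ring.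
move: h; set u := p * _; lra.
Qed.

Lemma gibbs (F : finType) (p q : F -> R) :
  (forall b, 0 <= p b) -> (forall b, 0 <= q b) -> (forall b, 0 < p b -> 0 < q b) ->
  \sum_b p b = 1 -> \sum_b q b = 1 ->
  0 <= \sum_b p b * (ln (p b) - ln (q b)) ?= iff [forall b, p b == q b].
Proof.
move=> p0 q0 hq sp sq.
have := @leif_sum R F predT (fun b => p b == q b) (fun b => p b - q b)
  (fun b => p b * (ln (p b) - ln (q b))) (fun b _ => @gibbs_term (p b) (q b) (p0 b) (q0 b) (@hq b)).
by rewrite sumrB sp sq subrr.
Qed.


Lemma ln_prod (I : finType) (F : I -> R) : (forall i, 0 < F i) ->
  ln (\prod_i F i) = \sum_i ln (F i).
Proof.
move=> Fp.
suff [] : 0 < \prod_i F i /\ ln (\prod_i F i) = \sum_i ln (F i) by [].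
elim/big_rec2: _ => [|i y1 y2 _ [y1p <-]]; first by rewrite ln1.
split; first by rewrite mulr_gt0.
by rewrite lnM // posrE.
Qed.

Lemma esum_inf (I : finType) (e : I -> \bar R) j :
  (forall i, (0 <= e i)%E) -> e j = +oo%E -> (\sum_i e i)%E = +oo%E.
Proof.
move=> e0 ej; apply/eqP; rewrite esum_eqy.
  by apply/existsP; exists j; rewrite ej eqxx.
by move=> i _; rewrite gt_eqF // (lt_le_trans _ (e0 i)) // ltNyr.
Qed.

Section KLgen.
Variable (F : finType).
Implicit Types (pi : F -> R) (M N : F -> F -> R).

Lemma KL_fin pi M N : (forall x y, 0 <= M x y) ->
  (forall x y, 0 < M x y -> 0 < N x y) ->
  KL pi M N = (\sum_x \sum_y pi x * M x y * (ln (M x y) - ln (N x y)))%:E.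
Proof.
move=> M0 MN; rewrite /KL ifF; last first.
  apply/negbTE/existsPn => x; apply/existsPn => y.
  apply/negP => /and3P[_ Mp /eqP N0].
  by have := MN x y Mp; rewrite N0 ltxx.
congr (_%:E); apply: eq_bigr => x _; apply: eq_bigr => y _.
apply: term_eq; [exact: M0 | exact: MN].
Qed.

Lemma KL_inf pi M N x y : 0 < pi x -> 0 < M x y -> N x y = 0 ->
  KL pi M N = +oo%E.
Proof.
move=> px Mp N0; rewrite /KL ifT //.
by apply/existsP; exists x; apply/existsP; exists y; rewrite px Mp N0 eqxx.
Qed.

Lemma KL_cases M N :
  (forall x y, 0 <= N x y) ->
  (forall x y, 0 < M x y -> 0 < N x y) \/
  (exists x y, 0 < M x y /\ N x y = 0).
Proof.
move=> N0.
case: (boolP [exists x, exists y, (0 < M x y) && (N x y == 0)]).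
  move=> /existsP[x /existsP[y /andP[Mp /eqP Ne]]]; right; by exists x, y.
move=> /existsPn h; left => x y Mp.
have := h x => /existsPn/(_ y); rewrite Mp /= => Nn.
by rewrite lt_neqAle eq_sym Nn N0.
Qed.

Lemma KLrow pi M N : positive pi -> transition M -> transition N ->
  (0 <= KL pi M N)%E /\ (KL pi M N = 0%E -> forall a b, M a b = N a b).
Proof.
move=> pp [M0 M1] [N0 N1].
case: (@KL_cases M N N0) => [MN|[x [y [Mp Ne]]]]; last first.
  by rewrite (@KL_inf pi M N x y (pp x) Mp Ne); split => //; rewrite leey.
rewrite KL_fin //.
have G a := @gibbs F (M a) (N a) (M0 a) (N0 a) (MN a) (M1 a) (N1 a).
have E : \sum_x \sum_y pi x * M x y * (ln (M x y) - ln (N x y)) =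
   \sum_x pi x * \sum_y M x y * (ln (M x y) - ln (N x y)).
  by apply: eq_bigr => x _; rewrite mulr_sumr; apply: eq_bigr => y _; rewrite mulrA.
have ge a : 0 <= pi a * \sum_y M a y * (ln (M a y) - ln (N a y)).
  by apply: mulr_ge0; [exact: ltW | by case: (G a)].
rewrite E; split.
  by rewrite lee_fin; apply: sumr_ge0 => a _; exact: ge.
move=> /eqP; rewrite eqe => /eqP e a b.
have := psumr_eq0P (fun a _ => ge a) e (i:=a) isT.
move/eqP; rewrite mulf_eq0 gt_eqF //= => /eqP e2.
case: (G a) => _; rewrite eq_sym e2 eqxx => /esym /forallP /(_ b) /eqP.
by [].
Qed.

End KLgen.

End Gen.

Section Main.
Variables (R : realType) (d : nat) (X : 'I_d -> finType).
Local Notation T := (prodspace X).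

Lemma sum_prod_dep (f : forall i, X i -> R) :
  \sum_(y : T) \prod_i f i (y i) = \prod_i \sum_(c : X i) f i c.
Proof.
rewrite (reindex (@dffun_of_fprod _ X)); last first.
  by apply: onW_bij; exact: dffun_of_fprod_bij.
pose F i := [ffun c : X i => f i c].
transitivity (\sum_(t : fprod X) \prod_(i in 'I_d) F i (t i)).
  by apply: eq_bigr => t _; apply: eq_bigr => i _; rewrite !ffunE.
rewrite big_fprod.
transitivity (\prod_i \sum_(t in tagged_with X i) untag 0 (F i) t).
  by rewrite bigA_distr_big_dep.
apply: eq_bigr => i _.
rewrite -(big_tag F i).
by apply: eq_bigr => c _; rewrite ffunE.
Qed.

Lemma part_sum i (F : T -> R) :
  \sum_(b : X i) \sum_(y : T | y i == b) F y = \sum_(y : T) F y.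
Proof.
by rewrite [RHS](partition_big (fun y : T => y i) predT).
Qed.

Lemma coord_exists (x0 : T) i (a : X i) : exists x : T, x i = a.
Proof.
exists [ffun j => @dfwith _ X (fun j => x0 j) i a j].
rewrite ffunE; exact: dfwith_in.
Qed.

Lemma sum_prod_row (f : forall i, X i -> R) i (b : X i) :
  (forall j, j != i -> \sum_c f j c = 1) ->
  \sum_(y : T | y i == b) \prod_j f j (y j) = f i b.
Proof.
move=> f1.
pose g j (c : X j) := if j == i then (Tagged X c == Tagged X b)%:R * f j c else f j c.
transitivity (\sum_(y : T) \prod_j g j (y j)).
  rewrite [RHS](bigID (fun y : T => y i == b)) /= [X in _ + X]big1 ?addr0.
    apply: eq_bigr => y /eqP yb; apply: eq_bigr => j _; rewrite /g.
    case: eqP => // ji; subst j; by rewrite yb eqxx mul1r.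
  move=> y yb; rewrite (bigD1 i) //= /g eqxx.
  by rewrite (_ : (Tagged X (y i) == Tagged X b) = false) ?mul0r //; apply/negbTE; rewrite eq_Tagged.
rewrite sum_prod_dep (bigD1 i) //=.
rewrite [X in _ * X]big1 => [|j ji]; last by rewrite /g (negbTE ji); apply: f1.
rewrite mulr1 (bigD1 b) //= /g eqxx eqxx mul1r big1 ?addr0 // => c cb.
by rewrite eq_Tagged (negbTE cb) mul0r.
Qed.


Section Part1.
Variables (pi : T -> R) (P : T -> T -> R).
Hypotheses (Hpi : prob_mass pi) (Hpos : positive pi) (HP : transition P).

Local Notation m := (marginal pi).
Let P0 : forall x y, 0 <= P x y. Proof. by case: HP. Qed.
Let pi0 : forall x, 0 <= pi x. Proof. by move=> x; apply: ltW. Qed.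
Local Notation Pm := (marginal_transition pi P).
Local Notation S i a b := (\sum_(x : T | x i == a) \sum_(y : T | y i == b) pi x * P x y).

Lemma m_gt0 i a : 0 < m i a.
Proof.
case: (pickP (@predT T)) => [x0 _|T0]; last first.
  by case: Hpi => _; rewrite big_pred0 // => /esym/eqP; rewrite oner_eq0.
have [x xa] := @coord_exists x0 i a.
rewrite /marginal (bigD1 x) ?xa //=.
apply: (lt_le_trans (Hpos x)); rewrite lerDl; apply: sumr_ge0 => y _.
by case: Hpi.
Qed.

Lemma mPm i a b : m i a * Pm i a b = S i a b.
Proof. by rewrite /marginal_transition mulrC divfK // gt_eqF // m_gt0. Qed.

Lemma S_ge0 i a b : 0 <= S i a b.
Proof.
apply: sumr_ge0 => x _; apply: sumr_ge0 => y _; apply: mulr_ge0.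
  exact: ltW.
by case: HP.
Qed.

Lemma Pm_ge0 i a b : 0 <= Pm i a b.
Proof. by rewrite /marginal_transition divr_ge0 ?S_ge0 // ltW // m_gt0. Qed.

Lemma Pm_trans i : transition (Pm i).
Proof.
split; first exact: Pm_ge0.
move=> a; rewrite /marginal_transition -mulr_suml.
rewrite (_ : \sum_b S i a b = m i a) ?divff ?gt_eqF ?m_gt0 //.
rewrite exchange_big /marginal; apply: eq_bigr => x _.
rewrite part_sum -mulr_sumr.
by case: HP => _ ->; rewrite mulr1.
Qed.

Lemma Pm_pos x y : 0 < P x y -> forall i, 0 < Pm i (x i) (y i).
Proof.
move=> Pp i; rewrite /marginal_transition divr_gt0 ?m_gt0 //.
rewrite (bigD1 x) //= (bigD1 y) //=.
rewrite -addrA ltr_pwDl ?mulr_gt0 //.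
apply: addr_ge0; first by apply: sumr_ge0 => z _; rewrite mulr_ge0.
by apply: sumr_ge0 => z _; apply: sumr_ge0 => w _; rewrite mulr_ge0.
Qed.

Lemma Pm_pos_inv i a b : 0 < Pm i a b ->
  exists (x : T) (y : T), [/\ x i = a, y i = b & 0 < P x y].
Proof.
move=> h.
case: (boolP [exists x : T, exists y : T, [&& x i == a, y i == b & 0 < P x y]]).
  by move=> /existsP[x /existsP[y /and3P[/eqP xa /eqP yb Pp]]]; exists x, y.
move=> /existsPn hn; exfalso; move: h.
rewrite /marginal_transition big1 ?mul0r ?ltxx // => x xa.
rewrite big1 // => y yb.
have := hn x => /existsPn /(_ y); rewrite xa yb /= => Pn.
have -> : P x y = 0 by apply/eqP; rewrite eq_le P0 andbT leNgt.
by rewrite mulr0.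
Qed.

Let Q := tensor Pm.

Lemma Q_ge0 x y : 0 <= Q x y.
Proof. by apply: prodr_ge0 => i _; apply: Pm_ge0. Qed.

Lemma Q_pos x y : 0 < P x y -> 0 < Q x y.
Proof. by move=> Pp; apply: prodr_gt0 => i _; apply: Pm_pos. Qed.

Lemma Q_row x i b : \sum_(y : T | y i == b) Q x y = Pm i (x i) b.
Proof.
rewrite /Q /tensor (@sum_prod_row (fun j c => Pm j (x j) c)) // => j _.
by case: (Pm_trans j) => _ ->.
Qed.

Lemma Q_pos_factors x y : 0 < Q x y -> forall i, 0 < Pm i (x i) (y i).
Proof.
move=> Qp i; rewrite lt_neqAle Pm_ge0 andbT eq_sym.
apply: contraTneq Qp => e.
by rewrite /Q /tensor (bigD1 i) //= e mul0r ltxx.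
Qed.

Lemma group_P i (G : X i -> X i -> R) :
  \sum_(x : T) \sum_(y : T) pi x * P x y * G (x i) (y i) =
  \sum_a \sum_b m i a * Pm i a b * G a b.
Proof.
rewrite -(part_sum i); apply: eq_bigr => a _.
under eq_bigr => x /eqP xa do rewrite -(part_sum i).
rewrite exchange_big /=; apply: eq_bigr => b _.
rewrite mPm mulr_suml; apply: eq_bigr => x /eqP xa.
rewrite mulr_suml; apply: eq_bigr => y /eqP yb.
by rewrite xa yb.
Qed.

Lemma group_Q i (G : X i -> X i -> R) :
  \sum_(x : T) \sum_(y : T) pi x * Q x y * G (x i) (y i) =
  \sum_a \sum_b m i a * Pm i a b * G a b.
Proof.
transitivity (\sum_(x : T) pi x * \sum_b Pm i (x i) b * G (x i) b).
  apply: eq_bigr => x _; rewrite mulr_sumr -(part_sum i).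
  apply: eq_bigr => b _; rewrite -Q_row mulr_suml mulr_sumr.
  by apply: eq_bigr => y /eqP yb; rewrite yb mulrA.
rewrite -(part_sum i); apply: eq_bigr => a _.
rewrite (eq_bigr (fun y => pi y * \sum_b Pm i a b * G a b)) => [|y /eqP -> //].
by rewrite -mulr_suml mulr_sumr; apply: eq_bigr => b _; rewrite mulrA.
Qed.

Lemma KLPQ : KL pi P Q =
  (\sum_(x : T) \sum_(y : T) pi x * P x y * (ln (P x y) - ln (Q x y)))%:E.
Proof. by apply: KL_fin => // x y; apply: Q_pos. Qed.

Lemma pyth (L : forall i, X i -> X i -> R) : (forall i, transition (L i)) ->
  KL pi P (tensor L) = (KL pi P Q + KL pi Q (tensor L))%E /\
  KL pi P (tensor L) = (KL pi P Q + \sum_i KL (m i) (Pm i) (L i))%E.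
Proof.
move=> HL.
have L0 i a b : 0 <= L i a b by case: (HL i).
have Lt0 x y : 0 <= tensor L x y by apply: prodr_ge0.
case: (@KL_cases _ _ P (tensor L) Lt0) => [good | [x [y [Pp Le]]]]; last first.
  have -> : KL pi P (tensor L) = +oo%E by apply: (@KL_inf _ _ pi P (tensor L) x y).
  have [i _ /eqP Li] : exists2 i, true & L i (x i) (y i) == 0.
    by apply/prodf_eq0; rewrite -/(tensor L x y) Le.
  have E2 : (\sum_i KL (m i) (Pm i) (L i) = +oo)%E.
    apply: (@esum_inf _ _ _ i).
      move=> j; case: (@KLrow _ _ (m j) (Pm j) (L j)) => //.
      + by move=> a; apply: m_gt0.
      + by apply: Pm_trans.
    by apply: (@KL_inf _ _ (m i) (Pm i) (L i) (x i) (y i)) => //; [apply: m_gt0 | apply: Pm_pos].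
  rewrite KLPQ E2 (@KL_inf _ _ pi Q (tensor L) x y) ?Q_pos //.
have goodi i a b : 0 < Pm i a b -> 0 < L i a b.
  move=> /Pm_pos_inv [x [y [xa yb Pp]]].
  rewrite lt_neqAle L0 andbT eq_sym; apply: contraTneq (good x y Pp) => e.
  by rewrite /tensor (bigD1 i) //= xa yb e mul0r ltxx.
have goodQ x y : 0 < Q x y -> 0 < tensor L x y.
  move=> Qp; apply: prodr_gt0 => i _; apply: goodi; exact: Q_pos_factors.
pose g i a b := ln (Pm i a b) - ln (L i a b).
have lnQL x y : 0 < Q x y -> ln (Q x y) - ln (tensor L x y) = \sum_i g i (x i) (y i).
  move=> Qp; rewrite /Q /tensor !ln_prod ?sumrB // => i.
    by apply: goodi; apply: Q_pos_factors.
  exact: Q_pos_factors.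
pose B := \sum_i \sum_a \sum_b m i a * Pm i a b * g i a b.
have HQ : \sum_(x : T) \sum_(y : T) pi x * Q x y * (ln (Q x y) - ln (tensor L x y)) = B.
  transitivity (\sum_(x : T) \sum_(y : T) \sum_i pi x * Q x y * g i (x i) (y i)).
    apply: eq_bigr => x _; apply: eq_bigr => y _; rewrite -mulr_sumr.
    have [->|Qn0] := eqVneq (Q x y) 0; first by rewrite !mulr0 !mul0r.
    by rewrite lnQL // lt_neqAle eq_sym Qn0 Q_ge0.
  under eq_bigr => x _ do rewrite exchange_big.
  rewrite exchange_big; apply: eq_bigr => i _; exact: group_Q.
have HPL : \sum_(x : T) \sum_(y : T) pi x * P x y * (ln (P x y) - ln (tensor L x y)) =
    \sum_(x : T) \sum_(y : T) pi x * P x y * (ln (P x y) - ln (Q x y)) + B.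
  transitivity (\sum_(x : T) \sum_(y : T) (pi x * P x y * (ln (P x y) - ln (Q x y)) +
                  \sum_i pi x * P x y * g i (x i) (y i))).
    apply: eq_bigr => x _; apply: eq_bigr => y _; rewrite -mulr_sumr.
    have [->|Pn0] := eqVneq (P x y) 0; first by rewrite !mulr0 !mul0r addr0.
    have Pp : 0 < P x y by rewrite lt_neqAle eq_sym Pn0 P0.
    rewrite -lnQL ?Q_pos //; ring.
  under eq_bigr => x _ do rewrite big_split /=.
  rewrite big_split /=; congr (_ + _).
  under eq_bigr => x _ do rewrite exchange_big.
  rewrite exchange_big; apply: eq_bigr => i _; exact: group_P.
rewrite KLPQ (@KL_fin _ _ pi P (tensor L)) // (@KL_fin _ _ pi Q (tensor L)) //; last exact: Q_ge0.
rewrite HQ HPL; split; first by rewrite EFinD.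
rewrite EFinD; congr (_ + _)%E; rewrite /B -sumEFin; apply: eq_bigr => i _.
rewrite (@KL_fin _ _ (m i) (Pm i) (L i) (Pm_ge0 i) (goodi i)).
by congr (_%:E); apply: eq_bigr => a _; apply: eq_bigr => b _.
Qed.

Lemma KLi_ge0 (L : forall i, X i -> X i -> R) : (forall i, transition (L i)) ->
  forall i, (0 <= KL (m i) (Pm i) (L i))%E.
Proof.
move=> HL i; case: (@KLrow _ _ (m i) (Pm i) (L i)) => //.
+ by move=> a; apply: m_gt0.
+ by apply: Pm_trans.
Qed.

Lemma KLi_eq0 (L : forall i, X i -> X i -> R) : (forall i, transition (L i)) ->
  forall i, KL (m i) (Pm i) (L i) = 0%E -> forall a b, Pm i a b = L i a b.
Proof.
move=> HL i; case: (@KLrow _ _ (m i) (Pm i) (L i)) => //.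
+ by move=> a; apply: m_gt0.
+ by apply: Pm_trans.
Qed.

Lemma uniq_min (L' : forall i, X i -> X i -> R) : (forall i, transition (L' i)) ->
  KL pi P (tensor L') = KL pi P Q -> forall i a b, L' i a b = Pm i a b.
Proof.
move=> HL' e i a b.
have [_ e2] := @pyth L' HL'.
have sge : (0 <= \sum_i KL (m i) (Pm i) (L' i))%E.
  by apply: sume_ge0 => j _; apply: KLi_ge0.
have s0 : (\sum_i KL (m i) (Pm i) (L' i) = 0)%E.
  move: e2 sge; rewrite e KLPQ.
  case: (\sum_i KL (m i) (Pm i) (L' i))%E => [r| |] //=.
  move=> [] h _; congr (_%:E); lra.
have ki : KL (m i) (Pm i) (L' i) = 0%E.
  apply/eqP; rewrite eq_le KLi_ge0 // andbT -s0 (bigD1 i) //=.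
  by apply: leeDl; apply: sume_ge0 => j _; apply: KLi_ge0.
by rewrite (@KLi_eq0 L' HL' i ki).
Qed.

Lemma Ipi_eq : Ipi pi P = KL pi P Q.
Proof.
apply/eqP; rewrite eq_le; apply/andP; split.
  apply: ereal_inf_lbound; exists Pm => //; exact: Pm_trans.
apply: le_ereal_inf_tmp => _ [L' HL' <-].
have [_ ->] := @pyth L' HL'; apply: leeDl; apply: sume_ge0 => i _.
exact: KLi_ge0.
Qed.

End Part1.

End Main.

Section Part2.
Variables (R : realType) (d : nat) (X : 'I_d -> finType).
Local Notation T := (prodspace X).
Variables (pi : T -> R) (P : T -> T -> R).
Hypotheses (Hpi : prob_mass pi) (Hpos : positive pi) (HP : transition P).
Hypothesis Hprod : forall x, pi x = \prod_(i < d) marginal pi i (x i).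
Hypothesis Hstat : stationary pi P.

Local Notation m := (marginal pi).
Local Notation Pm := (marginal_transition pi P).
Let Ps := reversal pi P.
Let Pms := marginal_transition pi Ps.
Let P0 : forall x y, 0 <= P x y. Proof. by case: HP. Qed.
Let pin0 x : pi x != 0. Proof. by rewrite gt_eqF. Qed.

Lemma Ps_trans : transition Ps.
Proof.
split.
  by move=> x y; apply: mulr_ge0; [apply: divr_ge0; apply: ltW | apply: P0].
move=> x; rewrite /Ps /reversal.
under eq_bigr => y _ do rewrite mulrAC.
by rewrite -mulr_suml Hstat divff.
Qed.

Lemma Pms_eq i a b : Pms i a b = m i b / m i a * Pm i b a.
Proof.
rewrite /Pms /marginal_transition.
rewrite (eq_bigr (fun x => \sum_(y : T | y i == b) pi y * P y x)); last first.
  move=> x _; apply: eq_bigr => y _; rewrite /Ps /reversal.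
  by rewrite mulrCA mulrA divfK.
rewrite exchange_big /=.
by rewrite [RHS]mulrAC (@mPm _ _ _ _ P Hpi Hpos).
Qed.

Lemma Qs_eq x y : tensor Pms x y = pi y / pi x * tensor Pm y x.
Proof.
rewrite /tensor (eq_bigr (fun i => m i (y i) * (m i (x i))^-1 * Pm i (y i) (x i))); last first.
  by move=> i _; rewrite Pms_eq.
by rewrite !big_split /= prodfV -!Hprod.
Qed.

Lemma KL_rev : KL pi Ps (tensor Pms) = KL pi P (tensor Pm).
Proof.
rewrite (@KLPQ _ _ _ _ _ Hpi Hpos Ps_trans) (@KLPQ _ _ _ _ _ Hpi Hpos HP).
congr (_%:E); rewrite exchange_big; apply: eq_bigr => y _; apply: eq_bigr => x _.
rewrite Qs_eq {1 2}/Ps /reversal.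
have [->|Pn0] := eqVneq (P y x) 0; first by rewrite !mulr0 !mul0r.
have Pp : 0 < P y x by rewrite lt_neqAle eq_sym Pn0 P0.
have Qp : 0 < tensor Pm y x by apply: (@Q_pos _ _ _ _ _ Hpi Hpos HP).
have cp : 0 < pi y / pi x by rewrite divr_gt0.
rewrite !lnM ?posrE //.
rewrite (_ : pi x * (pi y / pi x * P y x) = pi y * P y x); last by field; exact: pin0.
  ring. all: by rewrite invr_gt0.
Qed.

Lemma bisection : Ipi pi P = Ipi pi Ps.
Proof.
by rewrite (@Ipi_eq _ _ _ _ _ Hpi Hpos HP) (@Ipi_eq _ _ _ _ _ Hpi Hpos Ps_trans) KL_rev.
Qed.

End Part2.
Theorem theorem2p9 (R : realType) (d : nat) (X : 'I_d -> finType)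
    (P : prodspace X -> prodspace X -> R) (L : forall i, X i -> X i -> R) :
  transition P -> (forall i, transition (L i)) ->
  (* 1. Pythagorean identity, unique minimizer, value of I^pi(P) *)
  (forall pi : prodspace X -> R, prob_mass pi -> positive pi ->
     (KL pi P (tensor L) =
        (KL pi P (tensor (marginal_transition pi P))
         + KL pi (tensor (marginal_transition pi P)) (tensor L))%E)
     /\ (KL pi P (tensor L) =
        (KL pi P (tensor (marginal_transition pi P))
         + \sum_(i < d) KL (marginal pi i) (marginal_transition pi P i) (L i))%E)
     /\ (forall i, transition (marginal_transition pi P i))
     /\ (forall L' : forall i, X i -> X i -> R, (forall i, transition (L' i)) ->
           KL pi P (tensor L') = KL pi P (tensor (marginal_transition pi P)) ->
           forall i a b, L' i a b = marginal_transition pi P i a b)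
     /\ Ipi pi P = KL pi P (tensor (marginal_transition pi P))) /\
  (* 2. Bisection *)
  (forall pi : prodspace X -> R, prob_mass pi -> positive pi ->
     (forall x, pi x = \prod_(i < d) marginal pi i (x i)) ->
     stationary pi P ->
     Ipi pi P = Ipi pi (reversal pi P)).

Proof.
move=> HP HL; split.
  move=> pi Hpi Hpos.
  have [e1 e2] := @pyth R d X pi P Hpi Hpos HP L HL.
  split; first exact: e1.
  split; first exact: e2.
  split; first exact: (@Pm_trans R d X pi P Hpi Hpos HP).
  split; last exact: (@Ipi_eq R d X pi P Hpi Hpos HP).
  move=> L' HL' e i a b; exact: (@uniq_min R d X pi P Hpi Hpos HP L' HL' e i a b).
move=> pi Hpi Hpos Hprod Hstat.
exact: (@bisection R d X pi P Hpi Hpos HP Hprod Hstat).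
Qed.
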